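(* Let $G$ be a finitely generated group with finite generating set $S_G$ and let $H\ne\{1\}$ be a finite group. Equip $H\wr G$ with the word metric with respect to $(H\setminus\{1\})\cup S_G$ and let $K$ be the kernel of the projection $H\wr G\to G$ with the induced metric. If $\gamma$ is the growth function of $G$, then $D_K^0(r):=(2r+1)\gamma(r)$ is a $0$-dimensional control function of $K$.
   Context: Wreath product: $H\wr G$ is the set of pairs $(f,g)$, $f:G\to H$ finitely supported, with $(f_1,g_1)(f_2,g_2)=(f_1\cdot(g_1f_2),g_1g_2)$ where $(gf)(\gamma)=f(g^{-1}\gamma)$; $g\in G$ is identified with $(1,g)$ and $a\in H$ with $(f_a,1)$, $f_a(1)=a$, $f_a(\gamma)=1$ otherwise; the projection is $(f,g)\mapsto g$. Growth function: $\gamma(r)=\#\{g\in G:|g|_{S_G}<r\}$. For a metric space $X$, $r>0$: $r$-components of $Y\subseteq X$ are classes of points joined by sequences in $Y$ with consecutive distances $<r$. An $m$-dimensional control function of $X$ is $D:\mathbb{R}_+\to\mathbb{R}_+\cup\{\infty\}$ such that for each $r>0$ there is a cover $\{X_0,\dots,X_m\}$ of $X$ such that every open ball $B(x,r)$ lies in some $X_i$ and every $r$-component of each $X_i$ has diameter at most $D(r)$. *)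

(* Defs.v *)
From HB Require Import structures.
From mathcomp Require Import all_boot all_order all_algebra all_fingroup.
From mathcomp Require Import finmap.
From mathcomp Require Import boolp classical_sets cardinality reals.
From mathcomp Require Import constructive_ereal ereal.

Set Implicit Arguments.
Unset Strict Implicit.
Unset Printing Implicit Defensive.

Import Order.TTheory GRing.Theory Num.Theory.
Local Open Scope classical_set_scope.

Definition word_dist (R : realType) (X : eqType) (mul : X -> X -> X)
  (A : set X) (x y : X) : \bar R :=
  ereal_inf [set ((size w)%:R)%:E |
             w in [set w : seq X | (forall a, a \in w -> A a) /\ foldl mul x w = y]].

Section GroupWordMetric.
Local Open Scope fset_scope.
Local Open Scope group_scope.
Variables (R : realType) (G : groupType) (S : seq G).

Definition sym_gens : set G := [set s | s \in S \/ s^-1 \in S].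

Definition generates : Prop :=
  forall g : G, exists w : seq G,
    (forall a, a \in w -> sym_gens a) /\ foldl mul 1 w = g.

Definition word_length (g : G) : \bar R := word_dist R mul sym_gens 1 g.

Definition growth (r : R) : nat :=
  #|` fset_set [set g : G | (word_length g < r%:E)%E] |.

End GroupWordMetric.

Section Wreath.
Local Open Scope fset_scope.
Local Open Scope group_scope.
Variables (H : finGroupType) (G : groupType).

Definition lamps := {fsfun G -> H with 1}.

Definition lamps_mul (f1 f2 : lamps) : lamps :=
  [fsfun x in finsupp f1 `|` finsupp f2 => f1 x * f2 x | 1].

Definition lamps_shift (g : G) (f : lamps) : lamps :=
  [fsfun x in [fset g * y | y in finsupp f] => f (g^-1 * x) | 1].

Definition lamps_one : lamps := [fsfun x in fset0 => 1 | 1].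

Definition lamps_delta (a : H) : lamps := [fsfun x in [fset 1] => a | 1].

Definition wreath := (lamps * G)%type.

Definition wreath_mul (x y : wreath) : wreath :=
  (lamps_mul x.1 (lamps_shift x.2 y.1), x.2 * y.2).

Definition wreath_of_G (g : G) : wreath := (lamps_one, g).

Definition wreath_of_H (a : H) : wreath := (lamps_delta a, 1).

(* symmetric version of the generating set (H \ {1}) u S_G, i.e. the set
   (H \ {1}) u S_G u S_G^-1 ((H \ {1}) is already closed under inverses and
   the inverse of (1, s) is (1, s^-1)) *)
Definition wreath_gens (S : seq G) : set wreath :=
  [set x | (exists a : H, a != 1 /\ x = wreath_of_H a) \/
           (exists s : G, s \in S /\ (x = wreath_of_G s \/ x = wreath_of_G s^-1))].

Definition wreath_dist (R : realType) (S : seq G) (x y : wreath) : \bar R :=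
  word_dist R wreath_mul (wreath_gens S) x y.

Definition kernel_dist (R : realType) (S : seq G) (f1 f2 : lamps) : \bar R :=
  wreath_dist R S (f1, 1) (f2, 1).

End Wreath.

Section Control.
Local Open Scope ereal_scope.
Variables (R : realType) (X : Type) (d : X -> X -> \bar R).

Definition r_connected (Y : set X) (r : R) (x y : X) : Prop :=
  exists (n : nat) (z : nat -> X),
    [/\ z 0%N = x, z n = y, (forall i, (i <= n)%N -> Y (z i)) &
        (forall i, (i < n)%N -> d (z i) (z i.+1) < r%:E)].

Definition open_ball (x : X) (r : R) : set X := [set y | d x y < r%:E].

Definition control_function (m : nat) (D : R -> \bar R) : Prop :=
  forall r : R, (0 < r)%R ->
    exists U : 'I_m.+1 -> set X,
      [/\ (forall x, exists i, U i x),
          (forall x, exists i, open_ball x r `<=` U i) &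
          (forall i x y, r_connected (U i) r x y -> d x y <= D r)].

End Control.

(* Main.v *)
Require Import Defs.
From HB Require Import structures.
From mathcomp Require Import all_boot all_order all_algebra all_fingroup.
From mathcomp Require Import finmap.
From mathcomp Require Import boolp classical_sets cardinality reals.
From mathcomp Require Import constructive_ereal ereal.

Set Implicit Arguments.
Unset Strict Implicit.
Unset Printing Implicit Defensive.
Import Order.TTheory GRing.Theory Num.Theory.

Section Aux.
Local Open Scope fset_scope.
Local Open Scope group_scope.
Variables (H : finGroupType) (G : groupType).

Lemma lamps_mulE (f1 f2 : lamps H G) x : lamps_mul f1 f2 x = f1 x * f2 x.
Proof.
rewrite /lamps_mul fsfunE; case: ifP => // /negbT.
rewrite inE negb_or !memNfinsupp => /andP[/eqP -> /eqP ->].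
by rewrite mulg1.
Qed.

Lemma lamps_shiftE g (f : lamps H G) x : lamps_shift g f x = f (g^-1 * x).
Proof.
rewrite /lamps_shift fsfunE; case: ifP => // /negbT Hn.
apply/esym/eqP; rewrite -memNfinsupp; apply: contra Hn => Hin.
by apply/imfsetP; exists (g^-1 * x) => //; rewrite mulgA mulgV mul1g.
Qed.

Lemma lamps_oneE x : lamps_one H G x = 1.
Proof. by rewrite /lamps_one fsfunE inE. Qed.

Lemma lamps_deltaE (a : H) x : lamps_delta G a x = if x == 1 then a else 1.
Proof. by rewrite /lamps_delta fsfunE inE. Qed.

Lemma stepG (f : lamps H G) g s :
  wreath_mul (f, g) (wreath_of_G H s) = (f, g * s).
Proof.
rewrite /wreath_mul /=; congr pair; apply/fsfunP => x.
by rewrite lamps_mulE lamps_shiftE lamps_oneE mulg1.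
Qed.

Lemma stepH2 (f : lamps H G) g a :
  (wreath_mul (f, g) (wreath_of_H G a)).2 = g.
Proof. by rewrite /= mulg1. Qed.

Lemma stepH1 (f : lamps H G) g a x :
  (wreath_mul (f, g) (wreath_of_H G a)).1 x = if x == g then f x * a else f x.
Proof.
rewrite /= lamps_mulE lamps_shiftE lamps_deltaE.
have -> : (g^-1 * x == 1) = (x == g).
  apply/eqP/eqP => [E|->]; last by rewrite mulVg.
  by rewrite -(mul1g x) -(mulgV g) -mulgA E mulg1.
by case: ifP => //; rewrite mulg1.
Qed.

Lemma walkG (f : lamps H G) (v : seq G) h :
  foldl (@wreath_mul H G) (f, h) (map (@wreath_of_G H G) v) = (f, foldl mul h v).
Proof. by elim: v h => //= a v IH h; rewrite stepG IH. Qed.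

Lemma foldl_mulE (v : seq G) h : foldl mul h v = h * foldl mul 1 v.
Proof.
elim: v h => [|a v IH] h /=; first by rewrite mulg1.
by rewrite IH [in RHS]IH mul1g mulgA.
Qed.

Lemma foldl_rev (u : seq G) :
  foldl mul 1 (rev (map invg u)) = (foldl mul 1 u)^-1.
Proof.
elim: u => [|a u IH] /=; first by rewrite invg1.
rewrite rev_cons foldl_rcons IH [in RHS]foldl_mulE mul1g invMg //.
Qed.

Lemma sym_gensV (S : seq G) b : sym_gens S b -> sym_gens S b^-1.
Proof. by rewrite /sym_gens /= invgK => -[]; [right|left]. Qed.

Lemma gensG (S : seq G) b : sym_gens S b -> wreath_gens (H:=H) S (wreath_of_G H b).
Proof.
move=> [Hb|Hb]; right.
  by exists b; split => //; left.
by exists b^-1; split => //; right; rewrite invgK.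
Qed.

Lemma supp_walk (S : seq G) (w : seq (wreath H G)) :
  (forall a, a \in w -> wreath_gens (H:=H) S a) ->
  forall f g x, (foldl (@wreath_mul H G) (f, g) w).1 x != f x ->
  exists u : seq G, [/\ (forall b, b \in u -> sym_gens S b),
                        size u <= size w & foldl mul g u = x].
Proof.
elim: w => [|a w IH] Hw f g x /=; first by rewrite eqxx.
have Hw' : forall b, b \in w -> wreath_gens (H:=H) S b.
  by move=> b bw; apply: Hw; rewrite inE bw orbT.
have : wreath_gens (H:=H) S a by apply: Hw; rewrite inE eqxx.
case=> [[c [_ ->]]|[s [sS Es]]].
  rewrite [wreath_mul _ _]surjective_pairing stepH2 => Hx.
  have [E|NE] := eqVneq ((foldl (@wreath_mul H G)
      ((wreath_mul (f, g) (wreath_of_H G c)).1, g) w).1 x)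
      ((wreath_mul (f, g) (wreath_of_H G c)).1 x).
    move: Hx; rewrite E stepH1; have [->|_] := eqVneq x g; last by rewrite eqxx.
    by move=> _; exists [::].
  have [u [Hu1 Hu2 Hu3]] := IH Hw' _ _ _ NE.
  by exists u; split => //; apply: leqW.
have [s' [Hs' ->]] : exists s', sym_gens S s' /\ a = wreath_of_G H s'.
  case: Es => ->; first by exists s; split => //; left.
  by exists s^-1; split => //; right; rewrite invgK.
rewrite stepG => Hx.
have [u [Hu1 Hu2 Hu3]] := IH Hw' _ _ _ Hx.
exists (s' :: u); split => //.
by move=> b; rewrite inE => /orP[/eqP ->|]; [|apply: Hu1].
Qed.


Lemma set_one (S : seq G) (f : lamps H G) g c (u : seq G) :
  (forall b, b \in u -> sym_gens S b) -> foldl mul 1 u = g ->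
  exists W : seq (wreath H G),
    [/\ (forall a, a \in W -> wreath_gens (H:=H) S a),
        size W <= (size u).*2.+1,
        (foldl (@wreath_mul H G) (f, 1) W).2 = 1 &
        forall x, (foldl (@wreath_mul H G) (f, 1) W).1 x =
                  if x == g then c else f x].
Proof.
move=> Hu Hg.
have [Eb|Nb] := eqVneq ((f g)^-1 * c) 1.
  exists [::]; split => // x /=.
  have -> : c = f g by apply/esym/eqP; rewrite eq_mulVg1 Eb.
  by case: eqVneq => // ->.
exists (map (@wreath_of_G H G) u ++
        wreath_of_H G ((f g)^-1 * c) :: map (@wreath_of_G H G) (rev (map invg u))).
rewrite foldl_cat walkG Hg /= [wreath_mul _ _]surjective_pairing stepH2 walkG
        foldl_mulE foldl_rev Hg mulgV /=.
split => //.
- move=> a; rewrite mem_cat inE => /or3P[| /eqP ->|].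
  + by move=> /mapP[b bu ->]; apply: gensG; apply: Hu.
  + by left; exists ((f g)^-1 * c).
  + move=> /mapP[b]; rewrite mem_rev => /mapP[b' b'u ->] ->.
    by apply: gensG; apply: sym_gensV; apply: Hu.
- by rewrite size_cat /= !size_map size_rev size_map -addnn addnS.
- move=> x; rewrite stepH1; case: eqVneq => // ->.
  by rewrite mulgA mulgV mul1g.
Qed.

Lemma build (R : realType) (S : seq G) (r : R) (l : seq G) :
  forall (f y : lamps H G), (forall x, f x != y x -> x \in l) ->
  (forall x, x \in l -> exists u : seq G,
      [/\ (forall b, b \in u -> sym_gens S b), foldl mul 1 u = x &
          ((size u)%:R < r)%R]) ->
  exists W : seq (wreath H G),
    [/\ (forall a, a \in W -> wreath_gens (H:=H) S a),
        foldl (@wreath_mul H G) (f, 1) W = (y, 1) &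
        ((size W)%:R <= (2 * r + 1) * (size l)%:R)%R].
Proof.
elim: l => [|g l IH] f y Hd Hl.
  exists [::]; split => //=; last by rewrite mulr0.
  congr pair; apply/fsfunP => x; apply/eqP; apply/negP => /negP /Hd.
  by rewrite in_nil.
have [u [Hu1 Hu2 Hu3]] := Hl g (mem_head _ _).
have [W1 [HW1a HW1b HW1c HW1d]] := set_one f (y g) Hu1 Hu2.
set p := foldl _ _ W1 in HW1c HW1d.
have Hd' : forall x, p.1 x != y x -> x \in l.
  move=> x; rewrite HW1d; have [->|nxg] := eqVneq x g; first by rewrite eqxx.
  by move/Hd; rewrite inE (negbTE nxg).
have Hl' : forall x, x \in l -> exists u : seq G,
      [/\ (forall b, b \in u -> sym_gens S b), foldl mul 1 u = x &
          ((size u)%:R < r)%R].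
  by move=> x xl; apply: Hl; rewrite inE xl orbT.
have [W2 [HW2a HW2b HW2c]] := IH p.1 y Hd' Hl'.
exists (W1 ++ W2); split.
- by move=> a; rewrite mem_cat => /orP[]; [apply: HW1a|apply: HW2a].
- by rewrite foldl_cat -/p [p]surjective_pairing HW1c.
- rewrite size_cat natrD.
  have h1 : ((size W1)%:R <= 2 * r + 1 :> R)%R.
    apply: (le_trans (y := (((size u).*2.+1)%:R)%R)); first by rewrite ler_nat.
    rewrite -addn1 -muln2 natrD natrM mulrC lerD //.
    rewrite ler_wpM2l //; exact: ltW.
  have -> : size (g :: l) = (size l + 1)%N by rewrite addn1.
  by rewrite natrD mulrDr mulr1 addrC lerD.
Qed.


Fixpoint words (L : seq G) n : seq (seq G) :=
  if n is n'.+1 then [::] :: [seq a :: w | a <- L, w <- words L n']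
  else [:: [::]].

Lemma words_mem L n w : size w <= n -> all (mem L) w -> w \in words L n.
Proof.
elim: n w => [|n IH] [|a w] //=; try by rewrite mem_head.
move=> sw /andP[aL wL]; rewrite inE; apply/orP; right.
by apply: allpairs_f => //; apply: IH.
Qed.

Lemma finA (R : realType) (S : seq G) (r : R) :
  finite_set [set g : G | (word_length R S g < r%:E)%E].
Proof.
pose L := S ++ map invg S.
apply: (sub_finite_set _ (finite_seq (map (foldl mul 1) (words L (Num.trunc r))))).
move=> g /= /ereal_inf_lt [y [w [Hw1 Hw2] <-]]; rewrite lte_fin => ylt.
apply/mapP; exists w => //; apply: words_mem.
  rewrite -ltnS -(ltr_nat R); exact: (lt_trans ylt (truncnS_gt r)).
apply/allP => b /Hw1 Hb; change (b \in L); rewrite mem_cat.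
case: Hb => bS; first by rewrite bS.
by apply/orP; right; rewrite -[b]invgK map_f.
Qed.

Lemma word_of (R : realType) (S : seq G) (r : R) g :
  (word_length R S g < r%:E)%E ->
  exists u : seq G, [/\ (forall b, b \in u -> sym_gens S b), foldl mul 1 u = g &
          ((size u)%:R < r)%R].
Proof.
by move=> /ereal_inf_lt [y [w [Hw1 Hw2] <-]]; rewrite lte_fin => ylt; exists w.
Qed.

End Aux.

Theorem theorem4p2 (R : realType) (G : groupType) (S : seq G) (H : finGroupType) :
  generates S ->
  (exists a : H, a != 1%g) ->
  control_function (kernel_dist (H := H) R S) 0
    (fun r : R => (((2 * r + 1) * (growth S r)%:R)%R)%:E).
Proof.
move=> _ _ r r0.
exists (fun _ => setT); split.
- by move=> x; exists ord0.
- by move=> x; exists ord0.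
move=> i x y [n [z [z0 zn _ Hd]]].
pose A := [set g : G | (word_length R S g < r%:E)%E]%classic.
have claim : forall k, (k <= n)%N -> forall g, z k g != x g -> A g.
  elim=> [|k IH] kn g; first by rewrite z0 eqxx.
  have [E|NE] := eqVneq (z k.+1 g) (z k g).
    by rewrite E; apply: IH; exact: ltnW.
  move=> _.
  have := Hd k kn; rewrite /kernel_dist /wreath_dist /word_dist.
  move=> /ereal_inf_lt [e [w [Hw1 Hw2] <-]]; rewrite lte_fin => elt.
  have : (foldl (@wreath_mul H G) (z k, 1%g) w).1 g != z k g by rewrite Hw2.
  move=> /(supp_walk Hw1) [u [Hu1 Hu2 Hu3]].
  have h : (word_length R S g <= ((size u)%:R)%:E)%E.
    by apply: ge_ereal_inf; exists ((size u)%:R)%:E => //; exists u.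
  apply: (le_lt_trans h); rewrite lte_fin; apply: le_lt_trans elt.
  by rewrite ler_nat.
pose l := [seq g <- enum_fset (finsupp x `|` finsupp y)%fset | x g != y g].
have Hl1 : forall g, x g != y g -> g \in l.
  move=> g ne; rewrite mem_filter ne /=.
  have : g \in (finsupp x `|` finsupp y)%fset.
    rewrite inE !mem_finsupp; apply: contraR ne.
    by rewrite negb_or !negbK => /andP[/eqP -> /eqP ->].
  by [].
have HlA : forall g, g \in l -> A g.
  move=> g; rewrite mem_filter => /andP[ne _]; apply: (claim n (leqnn n)).
  by rewrite zn eq_sym.
have [W [HW1 HW2 HW3]] :=
  build (f:=x) (y:=y) Hl1 (fun g gl => word_of (HlA g gl)).
have Hs : (size l <= growth S r)%N.
  have ul : uniq l by rewrite filter_uniq // fset_uniq.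
  rewrite /growth -(undup_id ul) -card_fseq.
  apply: fsubset_leq_card; apply/fsubsetP => g; rewrite inE => /HlA Ag.
  by rewrite in_fset_set ?inE //; exact: finA.
apply: (@le_trans _ _ ((size W)%:R)%:E).
  by apply: ge_ereal_inf; exists ((size W)%:R)%:E => //; exists W.
rewrite lee_fin; apply: (le_trans HW3); rewrite ler_wpM2l ?ler_nat //.
by rewrite addr_ge0 // mulr_ge0 // ltW.
Qed.
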